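(* Let $G$ be a finite group with exponent $n_1$ and conjugacy class scheme $\mathcal{A}$, and let $\mathcal{L}=\mathbb{Q}(\zeta_{n_1})$. Let $F$ be a subfield of $\mathcal{L}$, let $\tau_k\in\mathrm{Gal}(\mathcal{L}/\mathbb{Q})$ be given by $\tau_k(\zeta_{n_1})=\zeta_{n_1}^k$ for $k\in\mathbb{Z}_{n_1}^*$, and let $Z_F=\{k\in\mathbb{Z}_{n_1}^*:\tau_k\in\mathrm{Gal}(\mathcal{L}/F)\}$. Define $g\sim_F h$ iff $g$ is conjugate to $h^k$ for some $k\in Z_F$. Then the set of matrices in $\mathcal{L}[\mathcal{A}]$ all of whose entries and eigenvalues lie in $F$ equals the $F$-span of the matrices $B_{[g]}=\sum_{h\sim_F g}A_h$, one for each $\sim_F$ equivalence class, and these form a subscheme of $\mathcal{A}$. In particular, a normal Cayley digraph $X(G,C)$ has all its eigenvalues in $F$ if and only if $C$ is a union of equivalence classes of $\sim_F$.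
   Context: For a finite group $G$ of order $n$ (written multiplicatively, identity $1$), $A_g$ is the $n\times n$ permutation matrix indexed by $G$ with $(A_g)_{a,b}=1$ iff $ba^{-1}=g$; for $C\subseteq G$, $A_C=\sum_{g\in C}A_g$, the adjacency matrix of the Cayley digraph $X(G,C)$ (arc $a\to b$ iff $ba^{-1}\in C$). If $K_0,\ldots,K_d$ are the conjugacy classes of $G$ and $A_i=A_{K_i}$, then $\mathcal{A}=\{A_0,\ldots,A_d\}$ is an association scheme, the conjugacy class scheme; $\mathcal{L}[\mathcal{A}]$ is its $\mathcal{L}$-span. $X(G,C)$ is normal if $C$ is a union of conjugacy classes. The exponent $n_1$ is the least positive integer with $g^{n_1}=1$ for all $g$, and $\zeta_{n_1}=e^{2\pi i/n_1}$. A subscheme of $\mathcal{A}$ is an association scheme whose members are sums of members of $\mathcal{A}$ over blocks of a partition of $\mathcal{A}$. *)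

(* Defs.v *)
From HB Require Import structures.
From mathcomp Require Import all_boot all_order all_algebra all_fingroup all_solvable all_field.
From mathcomp Require Import boolp.
Set Implicit Arguments. Unset Strict Implicit. Unset Printing Implicit Defensive.
Import GRing.Theory Num.Theory.
Local Open Scope ring_scope.

(* The finite group G is the whole carrier of a finGroupType gT.
   Matrices indexed by G are #|gT| x #|gT| matrices over algC, rows/columns
   numbered through enum_val. *)

Definition Amat (gT : finGroupType) (g : gT) : 'M[algC]_#|gT| :=
  \matrix_(i, j) ((enum_val j * (enum_val i)^-1 == g)%g)%:R.

Definition AmatS (gT : finGroupType) (C : {set gT}) : 'M[algC]_#|gT| :=
  \sum_(g in C) Amat g.

Definition expo (gT : finGroupType) : nat := exponent [set: gT].

Definition inL (z x : algC) : Prop :=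
  exists p : {poly rat}, x = (map_poly ratr p).[z].

Definition is_subfield (F : algC -> Prop) : Prop :=
  [/\ F 0, F 1,
      (forall x y, F x -> F y -> F (x - y)),
      (forall x y, F x -> F y -> F (x * y)) &
      (forall x, F x -> x != 0 -> F x^-1)].

(* k in Z_F : k a unit mod n1 and tau_k (p(z) |-> p(z^k)) fixes F pointwise *)
Definition inZF (n1 : nat) (z : algC) (F : algC -> Prop) (k : nat) : Prop :=
  [/\ (k < n1)%N, coprime k n1 &
      forall p : {poly rat}, F (map_poly ratr p).[z] ->
        (map_poly ratr p).[z ^+ k] = (map_poly ratr p).[z]].

Definition simF (gT : finGroupType) (z : algC) (F : algC -> Prop) (g h : gT) : Prop :=
  exists k, inZF (expo gT) z F k /\ g \in ((h ^+ k) ^: [set: gT])%g.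

Definition Bmat (gT : finGroupType) (z : algC) (F : algC -> Prop) (g : gT)
  : 'M[algC]_#|gT| :=
  \sum_(h : gT | `[< simF z F h g >]) Amat h.

Definition in_LA (gT : finGroupType) (z : algC) (M : 'M[algC]_#|gT|) : Prop :=
  exists c : {set gT} -> algC, (forall K, inL z (c K)) /\
    M = \sum_(K in classes [set: gT]) c K *: AmatS K.

Definition in_FspanB (gT : finGroupType) (z : algC) (F : algC -> Prop)
  (M : 'M[algC]_#|gT|) : Prop :=
  exists c : gT -> algC, (forall g, F (c g)) /\
    M = \sum_(g : gT) c g *: Bmat z F g.

(* (possibly non-symmetric) association scheme, given as the set S of its
   members: nonzero 0/1 matrices, partitioning J, containing I, closed under
   transpose, with well-defined intersection numbers *)
Definition is_assoc_scheme (n : nat) (S : 'M[algC]_n -> Prop) : Prop :=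
  [/\ (forall M, S M -> M != 0 /\ forall i j, M i j = 0 \/ M i j = 1),
      S 1%:M,
      (forall i j, exists! M, S M /\ M i j = 1),
      (forall M, S M -> S M^T) &
      (forall M N P, S M -> S N -> S P ->
         forall i j i' j', P i j = 1 -> P i' j' = 1 ->
           (M *m N) i j = (M *m N) i' j')].

Definition is_subscheme (gT : finGroupType) (S : 'M[algC]_#|gT| -> Prop) : Prop :=
  is_assoc_scheme S /\
  exists blocks : {set {set {set gT}}},
    partition blocks (classes [set: gT]) /\
    forall M, S M <-> exists2 b, b \in blocks & M = \sum_(K in b) AmatS K.

(* Main.v *)
Require Import Defs.
From HB Require Import structures.
From mathcomp Require Import all_boot all_order all_algebra all_fingroup all_solvable all_field.
From mathcomp Require Import boolp.
From mathcomp Require Import all_character.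
Set Implicit Arguments. Unset Strict Implicit. Unset Printing Implicit Defensive.
Import GRing.Theory Num.Theory.
Local Open Scope ring_scope.
Section Mat.
Variable gT : finGroupType.
Local Notation GT := [set: gT]%G.

Definition Mc (c : gT -> algC) : 'M[algC]_#|gT| :=
  \matrix_(i, j) c (enum_val j * (enum_val i)^-1)%g.

Lemma sum_enum (f : gT -> algC) : \sum_(i < #|gT|) f (enum_val i) = \sum_x f x.
Proof. by rewrite -(big_enum_val (A := predT)). Qed.

Lemma McE c i j : Mc c i j = c (enum_val j * (enum_val i)^-1)%g.
Proof. by rewrite mxE. Qed.

Lemma Mc_Amat c : \sum_g c g *: Amat g = Mc c.
Proof.
apply/matrixP => i j; rewrite summxE !mxE.
rewrite (bigD1 (enum_val j * (enum_val i)^-1)%g) //= !mxE eqxx mulr1.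
rewrite big1 ?addr0 // => g /negbTE ne; rewrite !mxE eq_sym ne mulr0 //.
Qed.

Definition conv (c1 c2 : gT -> algC) w := \sum_x c1 x * c2 (w * x^-1)%g.

Lemma Mc_mul c1 c2 : Mc c1 *m Mc c2 = Mc (conv c1 c2).
Proof.
apply/matrixP => i j; rewrite !mxE.
rewrite (eq_bigr (fun k => c1 (enum_val k * (enum_val i)^-1)%g *
   c2 (enum_val j * (enum_val k)^-1)%g)); last by move=> k _; rewrite !mxE.
rewrite (sum_enum (fun y => c1 (y * (enum_val i)^-1)%g * c2 (enum_val j * y^-1)%g)).
rewrite (reindex_inj (mulIg (enum_val i))) /=; apply: eq_bigr => x _.
by rewrite mulgK invMg mulgA.
Qed.

Lemma Mc_sub c d : Mc (fun x => c x - d x) = Mc c - Mc d.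
Proof. by apply/matrixP => i j; rewrite !mxE. Qed.

Definition classf (c : gT -> algC) := forall x y, c (x ^ y)%g = c x.

Definition lam (i : Iirr GT) (c : gT -> algC) :=
  (\sum_x c x * 'chi_i (x^-1)%g) / 'chi_i 1%g.

Definition ev (i : Iirr GT) (y : gT) : 'rV[algC]_#|gT| :=
  \row_j 'chi[GT]_i (enum_val j * y)%g.

Lemma chi_tr (i : Iirr GT) x : 'chi_i x = \tr ('Chi_i x).
Proof. by rewrite -irrRepr cfunE in_setT mulr1n. Qed.

Lemma Key (c : gT -> algC) (i : Iirr GT) w : classf c ->
  \sum_x c x * 'chi_i (x^-1 * w)%g = lam i c * 'chi_i w.
Proof.
move=> cc.
pose rG := 'Chi_i.
pose T := \sum_x c x *: rG (x^-1)%g.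
have cT : centgmx rG T.
  apply/centgmxP => y _; rewrite mulmx_sumr mulmx_suml.
  rewrite (reindex_inj (conjg_inj y^-1)%g) /=.
  apply: eq_bigr => x _; rewrite cc -!scalemxAl -scalemxAr -!repr_mxM ?in_setT //.
  congr (_ *: rG _); rewrite conjgE !invMg invgK.
  by rewrite mulgKV.
have /is_scalar_mxP[s Ts] := mx_abs_irr_cent_scalar (groupC (socle_irr _)) cT.
have H w' : \sum_x c x * 'chi_i (x^-1 * w')%g = s * 'chi_i w'.
  have -> : s * 'chi_i w' = \tr (T *m rG w') by rewrite Ts mul_scalar_mx mxtraceZ chi_tr.
  rewrite mulmx_suml raddf_sum; apply: eq_bigr => x _.
  by rewrite /= -scalemxAl mxtraceZ -repr_mxM ?in_setT // chi_tr.
rewrite H; congr (_ * _).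
rewrite /lam (eq_bigr (fun x => c x * 'chi_i (x^-1 * 1)%g)); last first.
  by move=> x _; rewrite mulg1.
by rewrite H mulfK ?irr1_neq0.
Qed.
End Mat.
Section Spec.
Variable gT : finGroupType.
Local Notation GT := [set: gT]%G.

Lemma ev_eigen (c : gT -> algC) i y : classf c ->
  ev i y *m Mc c = lam i c *: ev i y.
Proof.
move=> cc; apply/rowP => j; rewrite !mxE.
rewrite (eq_bigr (fun k => 'chi_i (enum_val k * y)%g * c (enum_val j * (enum_val k)^-1)%g));
  last by move=> k _; rewrite !mxE.
rewrite (sum_enum (fun a => 'chi_i (a * y)%g * c (enum_val j * a^-1)%g)).
rewrite (reindex_inj (h := fun x => x^-1 * enum_val j)%g); last first.
  by move=> x1 x2 /mulIg /invg_inj.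
rewrite -Key //; apply: eq_bigr => x _.
by rewrite invMg invgK mulgA mulgV mul1g mulrC mulgA.
Qed.

Lemma ev_span (A : 'M[algC]_#|gT|) :
  (forall i y, ev i y *m A = 0) -> A = 0.
Proof.
move=> H; apply/row_matrixP => j; rewrite row0 rowE.
have -> : delta_mx 0 j =
   (#|gT|%:R)^-1 *: \sum_i 'chi[GT]_i 1%g *: ev i (enum_val j)^-1.
  apply/rowP => k; rewrite !mxE summxE.
  rewrite (eq_bigr (fun i => 'chi[GT]_i 1%g * 'chi_i (enum_val k * (enum_val j)^-1)%g));
    last by move=> i _; rewrite !mxE.
  set w := (enum_val k * (enum_val j)^-1)%g.
  have -> : \sum_i 'chi[GT]_i 1%g * 'chi_i w = #|gT|%:R *+ (w == 1%g).
    rewrite -cardsT -cfRegE cfReg_sum sum_cfunE; apply: eq_bigr => i _.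
    by rewrite cfunE.
  rewrite /w -eq_mulgV1 (inj_eq enum_val_inj) eqxx /=.
  have nz : (#|gT|%:R : algC) != 0.
    by rewrite pnatr_eq0 -lt0n; apply/card_gt0P; exists 1%g.
  by case: (k == j); rewrite /= ?mulr0n ?mulr0 // mulr1n mulVf.
rewrite -scalemxAl mulmx_suml big1 ?scaler0 // => i _.
by rewrite -scalemxAl H scaler0.
Qed.

Lemma ev_neq0 i : ev i 1%g != 0 :> 'rV[algC]_#|gT|.
Proof.
apply/eqP => /rowP /(_ (enum_rank 1%g)); rewrite !mxE enum_rankK mulg1.
by move/eqP; rewrite (negbTE (irr1_neq0 i)).
Qed.

Lemma lam_eig (c : gT -> algC) i : classf c -> eigenvalue (Mc c) (lam i c).
Proof. by move=> cc; apply/eigenvalueP; exists (ev i 1%g); rewrite ?ev_eigen ?ev_neq0. Qed.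

Definition Pm (M : 'M[algC]_#|gT|) (s : seq algC) : 'M[algC]_#|gT| :=
  foldr (fun (x : algC) (P : 'M[algC]_#|gT|) => (M - x%:M) *m P) (1%:M : 'M[algC]_#|gT|) s.

Lemma Pm_eig (M : 'M[algC]_#|gT|) (v : 'rV[algC]_#|gT|) a s : v *m M = a *: v ->
  v *m Pm M s = (\prod_(x <- s) (a - x)) *: v.
Proof.
move=> Hv; elim: s => [|x s IH] /=; first by rewrite big_nil scale1r mulmx1.
rewrite big_cons mulmxA mulmxBr Hv mul_mx_scalar -scalerBl -scalemxAl IH.
by rewrite scalerA.
Qed.

Lemma eig_lam (c : gT -> algC) a : classf c -> eigenvalue (Mc c) a ->
  exists i, a = lam i c.
Proof.
move=> cc /eigenvalueP[v Hv nzv].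
pose s := [seq lam i c | i <- enum 'I_(Nirr GT)].
have P0 : Pm (Mc c) s = 0.
  apply: ev_span => i y; rewrite (Pm_eig _ (ev_eigen i y cc)).
  rewrite (big_rem (lam i c)) /=; last by apply: map_f; rewrite mem_enum.
  by rewrite subrr mul0r scale0r.
have := Pm_eig s Hv; rewrite P0 mulmx0 => /esym /eqP.
rewrite scaler_eq0 (negbTE nzv) orbF prodf_seq_eq0 => /hasP[x].
rewrite /s => /mapP[i _ ->] /=; rewrite subr_eq0 => /eqP ->; by exists i.
Qed.

Lemma lam_inj (c : gT -> algC) : classf c -> (forall i, lam i c = 0) ->
  forall x, c x = 0.
Proof.
move=> cc H x.
have : Mc c = 0 by apply: ev_span => i y; rewrite ev_eigen // H scale0r.
move/matrixP => /(_ (enum_rank 1%g) (enum_rank x)); rewrite !mxE !enum_rankK.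
by rewrite invg1 mulg1.
Qed.

End Spec.
Section Gal.
Variable gT : finGroupType.
Local Notation GT := [set: gT]%G.
Local Notation n1 := (expo gT).

Lemma chi_diag (i : Iirr GT) x : exists m (e : 'I_m -> algC),
  (forall j, e j ^+ n1 = 1) /\ forall k, 'chi_i (x ^+ k)%g = \sum_j e j ^+ k.
Proof.
have [e [[B uB rGx] [e1 _] _ _]] := repr_rsim_diag 'Chi_i (in_setT x).
exists _, (fun j => e 0 j); split.
  move=> j; have /dvdnP[q ->] : (#[x]%g %| n1)%N by apply: dvdn_exponent; rewrite in_setT.
  by rewrite mulnC exprM e1 expr1n.
move=> k; rewrite chi_tr.
have -> : 'Chi_i (x ^+ k)%g = invmx B *m diag_mx (\row_j e 0 j ^+ k) *m B.
  elim: k => [|k IH].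
    have -> : (\row_j e 0 j ^+ 0) = const_mx 1 by apply/rowP => j; rewrite !mxE expr0.
    by rewrite diag_const_mx mulmx1 mulVmx // expg0 repr_mx1.
  rewrite expgSr repr_mxM ?in_setT // IH rGx.
  rewrite -!mulmxA (mulmxA B) mulmxV // mul1mx (mulmxA (diag_mx _)) mulmx_diag.
  by congr (_ *m (diag_mx _ *m _)); apply/rowP => j; rewrite !mxE exprSr.
rewrite -mulmxA mxtrace_mulC -mulmxA mulmxV // mulmx1 mxtrace_diag.
by apply: eq_bigr => j _; rewrite mxE.
Qed.

Definition autk (u : {rmorphism algC -> algC}) k :=
  forall e, e ^+ n1 = 1 -> u e = e ^+ k.

Lemma chi_aut u k (i : Iirr GT) x : autk u k -> u ('chi_i x) = 'chi_i (x ^+ k)%g.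
Proof.
move=> H; have [m [e [e1 ek]]] := chi_diag i x.
rewrite -[x in 'chi_i x]expg1 !ek rmorph_sum; apply: eq_bigr => j _.
by rewrite expr1 H.
Qed.

Lemma expo_1 (y : gT) : (y ^+ n1)%g = 1%g.
Proof. by apply: expg_exponent; rewrite in_setT. Qed.

Lemma powK k k' (y : gT) : (k * k' = 1 %[mod n1])%N -> ((y ^+ k) ^+ k')%g = y.
Proof.
move=> H; rewrite -expgM -(expg_mod _ (expo_1 y)) H (expg_mod _ (expo_1 y)).
exact: expg1.
Qed.

Lemma inv_mod k : coprime k n1 -> exists k', (k * k' = 1 %[mod n1])%N.
Proof.
move=> ck; exists (k ^ (totient n1).-1)%N.
rewrite -expnS prednK ?totient_gt0 ?exponent_gt0 //.
exact: Euler_exp_totient.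
Qed.

Lemma classf_pow (c : gT -> algC) k : classf c -> classf (fun x : gT => c (x ^+ k)%g).
Proof. by move=> cc x y /=; rewrite -conjXg cc. Qed.

Lemma lam_sub (i : Iirr GT) (c d : gT -> algC) : lam i (fun x => c x - d x) = lam i c - lam i d.
Proof.
rewrite /lam -mulrBl -sumrB; congr (_ / _); apply: eq_bigr => x _; exact: mulrBl.
Qed.

Lemma lam_aut u k k' (i : Iirr GT) (c : gT -> algC) : autk u k -> (k * k' = 1 %[mod n1])%N ->
  (forall x, u (c x) = c x) -> u (lam i c) = lam i (fun x => c (x ^+ k')%g).
Proof.
move=> au kk cu; rewrite /lam fmorph_div (chi_aut _ _ au) expg1n rmorph_sum.
congr (_ / _).
rewrite (reindex_inj (h := fun y => (y ^+ k')%g)) /=; last first.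
  move=> y1 y2 /(congr1 (fun y => (y ^+ k)%g)).
  by rewrite !powK // mulnC.
apply: eq_bigr => y _; rewrite rmorphM cu (chi_aut _ _ au).
by rewrite expgVn powK // mulnC.
Qed.

Lemma core_inv u k (c : gT -> algC) : classf c -> coprime k n1 -> autk u k ->
  (forall x, u (c x) = c x) -> (forall i, u (lam i c) = lam i c) ->
  forall x, c (x ^+ k)%g = c x.
Proof.
move=> cc ck au cu lu x.
have [k' kk] := inv_mod ck.
pose d := fun y => c y - c (y ^+ k')%g.
have cd : classf d by move=> y w; rewrite /d cc (classf_pow k' cc).
have := lam_inj cd; rewrite /d => H.
have {}H y : c y = c (y ^+ k')%g.
  apply/eqP; rewrite -subr_eq0; apply/eqP; apply: H => i.
  by rewrite lam_sub -(lam_aut i au kk cu) lu subrr.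
by rewrite H powK.
Qed.

Lemma core_fix u k (c : gT -> algC) : classf c -> coprime k n1 -> autk u k ->
  (forall x, u (c x) = c x) -> (forall x, c (x ^+ k)%g = c x) ->
  forall i, u (lam i c) = lam i c.
Proof.
move=> cc ck au cu ci i.
have [k' kk] := inv_mod ck.
rewrite (lam_aut i au kk cu); congr (_ / _); apply: eq_bigr => x _.
by rewrite -ci powK // mulnC.
Qed.

End Gal.
Local Notation pQ := (map_poly (ratr : rat -> algC)).

Lemma u_pQ (u : {rmorphism algC -> algC}) (p : {poly rat}) y :
  u (pQ p).[y] = (pQ p).[u y].
Proof.
rewrite -horner_map -map_poly_comp; congr (_.[_]).
by apply: eq_map_poly => a /=; rewrite fmorph_rat.
Qed.

Section LPart.
Variable z : algC.

Lemma inL_add x y : inL z x -> inL z y -> inL z (x + y).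
Proof. by move=> [p ->] [q ->]; exists (p + q); rewrite rmorphD hornerD. Qed.

Lemma inL_mul x y : inL z x -> inL z y -> inL z (x * y).
Proof. by move=> [p ->] [q ->]; exists (p * q); rewrite rmorphM hornerM. Qed.

Lemma inL_rat r : inL z (ratr r).
Proof. by exists r%:P; rewrite map_polyC hornerC. Qed.

Lemma inL_zX m : inL z (z ^+ m).
Proof. by exists 'X^m; rewrite map_polyXn hornerXn. Qed.

Lemma inL_sum (I : Type) (r : seq I) (P : pred I) (f : I -> algC) :
  (forall i, P i -> inL z (f i)) -> inL z (\sum_(i <- r | P i) f i).
Proof.
move=> H; apply: big_ind => //; last exact: inL_add.
by exists 0; rewrite rmorph0 horner0.
Qed.
End LPart.

Section FPart.
Variables (F : algC -> Prop) (hF : is_subfield F).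

Lemma F0 : F 0. Proof. by case: hF. Qed.
Lemma F1 : F 1. Proof. by case: hF. Qed.
Lemma FB x y : F x -> F y -> F (x - y). Proof. by case: hF => _ _ H _ _; apply: H. Qed.
Lemma FM x y : F x -> F y -> F (x * y). Proof. by case: hF => _ _ _ H _; apply: H. Qed.
Lemma FN x : F x -> F (- x). Proof. by move=> Fx; rewrite -sub0r; apply: FB F0 Fx. Qed.
Lemma FD x y : F x -> F y -> F (x + y).
Proof. by move=> Fx Fy; rewrite -[y]opprK; apply: FB => //; apply: FN. Qed.
Lemma FV x : F x -> F x^-1.
Proof.
case: hF => _ _ _ _ H Fx; have [->|nz] := eqVneq x 0; last exact: H.
by rewrite invr0; exact: F0.
Qed.
Lemma Fnat m : F m%:R.
Proof. by elim: m => [|m IH]; [exact: F0 | rewrite -addn1 natrD; apply: FD IH F1]. Qed.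
Lemma Fint m : F m%:~R.
Proof. by case: m => m; [exact: Fnat | rewrite NegzE mulrNz; apply/FN/Fnat]. Qed.
Lemma Frat r : F (ratr r).
Proof.
rewrite -[r]divq_num_den fmorph_div !rmorph_int.
by apply: FM; [exact: Fint | apply/FV/Fint].
Qed.
Lemma Fsum (I : Type) (r : seq I) (P : pred I) (f : I -> algC) :
  (forall i, P i -> F (f i)) -> F (\sum_(i <- r | P i) f i).
Proof. by move=> H; apply: big_ind => //; [exact: F0 | exact: FD]. Qed.
Lemma Fb (b : bool) : F b%:R.
Proof. exact: Fnat. Qed.

End FPart.
Lemma cyclo_field_exists n (z : algC) : n.-primitive_root z ->
  {Qn : splittingFieldType rat & galois 1 {:Qn} &
    {QnC : {rmorphism Qn -> algC} & {w : Qn | QnC w = z & <<1; w>>%VS = fullv}}}.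
Proof.
move=> prim_z; have n_gt0 := prim_order_gt0 prim_z.
have [Qn [QnC [[|w []] // [Dz] genQn]]] := num_field_exists [:: z].
have prim_w: n.-primitive_root w by rewrite -Dz fmorph_primitive_root in prim_z.
have Q_Xn1: ('X^n - 1 : {poly Qn}) \is a polyOver 1%AS.
  by rewrite rpredB ?rpred1 ?rpredX //= polyOverX.
have splitXn1: splittingFieldFor 1 ('X^n - 1) {:Qn}.
  pose r := codom (fun i : 'I_n => w ^+ i).
  have Dr: 'X^n - 1 = \prod_(y <- r) ('X - y%:P).
    by rewrite -(factor_Xn_sub_1 prim_w) big_mkord big_image.
  exists r; first by rewrite -Dr eqpxx.
  apply/eqP; rewrite eqEsubv subvf -genQn adjoin_seqSr //; apply/allP=> /=.
  by rewrite andbT -root_prod_XsubC -Dr; apply/unity_rootP/prim_expr_order.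
have Qn_ax : FieldExt_isSplittingField _ Qn by constructor; exists ('X^n - 1).
exists (HB.pack_for (splittingFieldType rat) Qn Qn_ax).
  apply/splitting_galoisField.
  exists ('X^n - 1); split => //.
  apply: separable_Xn_sub_1; rewrite -(fmorph_eq0 QnC) rmorph_nat.
  by rewrite pnatr_eq0 -lt0n.
exists QnC; exists w => //.
by rewrite span_seq1 in genQn.
Qed.
Lemma QnC_poly (Qn : fieldExtType rat) (QnC : {rmorphism Qn -> algC}) (q : {poly rat}) y :
  QnC (map_poly (in_alg Qn) q).[y] = (pQ q).[QnC y].
Proof.
rewrite -horner_map -map_poly_comp; congr (_.[_]); apply: eq_map_poly => a /=.
by rewrite alg_num_field fmorph_rat.
Qed.

Lemma aut_poly (Qn : fieldExtType rat) (f : {rmorphism Qn -> Qn}) (q : {poly rat}) y :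
  f (map_poly (in_alg Qn) q).[y] = (map_poly (in_alg Qn) q).[f y].
Proof.
rewrite -horner_map -map_poly_comp; congr (_.[_]); apply: eq_map_poly => a /=.
by rewrite alg_num_field fmorph_rat.
Qed.

Lemma fixed_inF n z (hz : n.-primitive_root z) (F : algC -> Prop) (hF : is_subfield F)
  (p : {poly rat}) :
  (forall k, inZF n z F k -> (pQ p).[z ^+ k] = (pQ p).[z]) -> F (pQ p).[z].
Proof.
move=> Hp.
have [Qn galQn [QnC [w Dz genQn]]] := cyclo_field_exists hz.
pose P x := F (QnC x).
have PX x m : P x -> P (x ^+ m).
  rewrite /P rmorphXn => Px; elim: m => [|m IH]; first by rewrite expr0; exact: F1.
  by rewrite exprS; apply: FM.
pose good (U : {subfield Qn}) := forall x, x \in U -> P x.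
have P_U (U : {subfield Qn}) y : good U -> P y -> forall x, x \in <<U; y>>%VS -> P x.
  move=> gU Py x /Fadjoin_polyP[q qU ->]; rewrite /P horner_coef rmorph_sum.
  apply: Fsum => // i _; rewrite rmorphM; apply: FM => //.
    by apply: gU; apply: polyOverP.
  by apply: PX.
have good1 : good 1%AS.
  move=> x /vlineP[a ->]; rewrite /P rmorphZ_num rmorph1 mulr1; exact: Frat.
pose Pd d := `[< exists U : {subfield Qn}, good U /\ \dim U = d >].
have exP : exists d, Pd d by exists (\dim (1%AS : {subfield Qn})); apply/asboolP; exists 1%AS.
have ubP d : Pd d -> (d <= \dim {:Qn})%N by move=> /asboolP[U [_ <-]]; apply: dimvS; apply: subvf.
have [U gU maxU] : exists2 U : {subfield Qn}, good U &
    forall V : {subfield Qn}, good V -> (\dim V <= \dim U)%N.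
  case: (ex_maxnP exP ubP) => d /asboolP[U [gU dU]] maxd; exists U => // V gV.
  by rewrite dU; apply: maxd; apply/asboolP; exists V.
have inU y : P y -> y \in U.
  move=> Py; apply/negPn/negP => nyU.
  have gV : good <<U; y>>%AS by move=> x; exact: P_U.
  have := maxU _ gV; apply/negP; rewrite -ltnNge.
  have sUV : (U <= <<U; y>>%AS)%VS := subv_adjoin U y.
  move: (dimv_leqif_eq sUV) => [leUV eqUV].
  rewrite ltn_neqAle leUV andbT eqUV; apply: contra nyU => /eqP ->.
  exact: memv_adjoin.
have galU : galois U {:Qn} by apply: galoisS galQn; rewrite sub1v subvf.
pose a0 := (map_poly (in_alg Qn) p).[w].
have Da0 : QnC a0 = (pQ p).[z] by rewrite QnC_poly Dz.
rewrite -Da0; apply: gU.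
rewrite -(elimT galois_fixedField galU); apply/fixedFieldP; first exact: memvf.
move=> s sG.
have prim_w : n.-primitive_root w by rewrite -Dz fmorph_primitive_root in hz.
have prim_sw : n.-primitive_root (s w) by rewrite fmorph_primitive_root.
have [k Dk] := prim_rootP prim_w (prim_expr_order prim_sw).
have ck : coprime k n by rewrite -(prim_root_exp_coprime k prim_w) -Dk.
have fixU : {in U, forall x, s x = x}.
  by move: sG; rewrite gal_kHom ?subvf // => /kHomP_tmp[].
have zk : inZF n z F k.
  split => //; move=> q Fq.
  set y := (map_poly (in_alg Qn) q).[w].
  have yU : y \in U by apply: inU; rewrite /P QnC_poly Dz.
  rewrite -Dz -rmorphXn -!QnC_poly -Dk -(aut_poly s); congr (QnC _); exact: fixU yU.
apply: (fmorph_inj QnC); rewrite Da0 -(Hp k zk).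
by rewrite -Dz -rmorphXn -QnC_poly -Dk -(aut_poly s).
Qed.
Section Equiv.
Variables (gT : finGroupType) (z : algC) (hz : (expo gT).-primitive_root z)
  (F : algC -> Prop) (hF : is_subfield F) (hFL : forall x, F x -> inL z x).
Local Notation n1 := (expo gT).
Local Notation GT := [set: gT]%G.
Local Notation ZF := (inZF n1 z F).

Lemma n1_gt0 : (0 < n1)%N.
Proof. exact: exponent_gt0. Qed.

Lemma pow_mod (y : gT) k : (y ^+ (k %% n1))%g = (y ^+ k)%g.
Proof. exact: expg_mod (expo_1 y). Qed.

Lemma F_fix u k x : autk gT u k -> ZF k -> F x -> u x = x.
Proof.
move=> au [_ _ Hk] Fx; have [p Dx] := hFL Fx.
by rewrite Dx u_pQ au ?(prim_expr_order hz) // Hk // -Dx.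
Qed.

Lemma zf_1 : ZF (1 %% n1).
Proof.
split; first by rewrite ltn_pmod ?n1_gt0.
  by rewrite coprime_modl coprime1n.
by move=> q _; rewrite (prim_expr_mod hz) expr1.
Qed.

Lemma zf_mul k1 k2 : ZF k1 -> ZF k2 -> ZF ((k1 * k2) %% n1).
Proof.
move=> [_ c1 H1] [_ c2 H2]; split; first by rewrite ltn_pmod ?n1_gt0.
  by rewrite coprime_modl coprimeMl c1 c2.
move=> q Fq; have [u au] := Qn_aut_exists c2.
rewrite (prim_expr_mod hz) exprM -au; last by rewrite exprAC (prim_expr_order hz) expr1n.
by rewrite -u_pQ H1 // u_pQ au ?(prim_expr_order hz) // H2.
Qed.

Lemma zf_pow k m : ZF k -> ZF ((k ^ m) %% n1).
Proof.
move=> zk; elim: m => [|m IH]; first by rewrite expn0; exact: zf_1.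
by rewrite expnSr -modnMml; apply: zf_mul.
Qed.

Lemma zf_inv k : ZF k -> exists2 k', ZF k' & (k * k' = 1 %[mod n1])%N.
Proof.
move=> zk; exists ((k ^ (totient n1).-1) %% n1)%N; first exact: zf_pow.
have [_ ck _] := zk.
rewrite modnMmr -expnS prednK ?totient_gt0 ?n1_gt0 //.
exact: Euler_exp_totient.
Qed.

Lemma simF_refl (g : gT) : simF z F g g.
Proof. by exists (1 %% n1)%N; split; [exact: zf_1 | rewrite pow_mod expg1 class_refl]. Qed.

Lemma class_pow (h x : gT) k : h \in (x ^: GT)%g -> (h ^+ k)%g \in ((x ^+ k) ^: GT)%g.
Proof. by case/imsetP => y _ ->; rewrite -conjXg memJ_class ?in_setT. Qed.

Lemma simF_sym (g h : gT) : simF z F h g -> simF z F g h.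
Proof.
move=> [k [zk hk]]; have [k' zk' kk] := zf_inv zk.
exists k'; split => //.
have := class_pow k' hk; rewrite powK // => H.
by rewrite class_sym ?in_setT.
Qed.

Lemma simF_trans (a b c : gT) : simF z F a b -> simF z F b c -> simF z F a c.
Proof.
move=> [k1 [z1 h1]] [k2 [z2 h2]].
exists ((k2 * k1) %% n1)%N; split; first exact: zf_mul.
rewrite pow_mod expgM; apply: class_trans h1 _; exact: class_pow.
Qed.

Lemma simF_pow (h : gT) k : ZF k -> simF z F (h ^+ k)%g h.
Proof. by move=> zk; exists k; split => //; apply: class_refl. Qed.

Lemma simF_conjl (h y : gT) : simF z F (h ^ y)%g h.
Proof.
exists (1 %% n1)%N; split; first exact: zf_1.
by rewrite pow_mod expg1 memJ_class ?in_setT.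
Qed.

Definition clF (g : gT) : {set gT} := [set h | `[< simF z F h g >]].

Lemma in_clF (h g : gT) : (h \in clF g) = `[< simF z F h g >].
Proof. by rewrite inE. Qed.

Lemma clF_eq (a b : gT) : simF z F a b -> clF a = clF b.
Proof.
move=> ab; apply/setP => h; rewrite !in_clF; apply/asboolP/asboolP => H.
  exact: simF_trans H ab.
exact: simF_trans H (simF_sym ab).
Qed.

Lemma clF_eqE (a b : gT) : (clF a == clF b) = `[< simF z F a b >].
Proof.
apply/eqP/asboolP => [E | ]; last exact: clF_eq.
have : a \in clF a by rewrite in_clF; apply/asboolP; exact: simF_refl.
by rewrite E in_clF => /asboolP.
Qed.

Lemma clF_conj (h y g : gT) : (h ^ y)%g \in clF g = (h \in clF g).
Proof.
rewrite !in_clF; apply/asboolP/asboolP => H.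
  by apply: simF_trans H; apply: simF_sym; apply: simF_conjl.
by apply: simF_trans H; apply: simF_conjl.
Qed.

Lemma clF_pow (h : gT) k (g : gT) : ZF k -> (h ^+ k)%g \in clF g = (h \in clF g).
Proof.
move=> zk; rewrite !in_clF; apply/asboolP/asboolP => H.
  by apply: simF_trans H; apply: simF_sym; apply: simF_pow.
by apply: simF_trans H; apply: simF_pow.
Qed.

Lemma clF_inv (h g : gT) : (h^-1)%g \in clF (g^-1)%g = (h \in clF g).
Proof.
suff H (a b : gT) : a \in clF b -> (a^-1)%g \in clF (b^-1)%g.
  by apply/idP/idP => [/H|/H//]; rewrite !invgK.
rewrite !in_clF => /asboolP[k [zk hk]]; apply/asboolP; exists k; split => //.
by case/imsetP: hk => y _ ->; rewrite expgVn -conjVg memJ_class ?in_setT.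
Qed.

End Equiv.
Section Core.
Variables (gT : finGroupType) (z : algC) (hz : (expo gT).-primitive_root z)
  (F : algC -> Prop) (hF : is_subfield F) (hFL : forall x, F x -> inL z x).
Local Notation n1 := (expo gT).
Local Notation GT := [set: gT]%G.
Local Notation ZF := (inZF n1 z F).

Lemma chi_inL (i : Iirr GT) x : inL z ('chi_i x).
Proof.
have [m [e [e1 ek]]] := chi_diag i x.
rewrite -[x]expg1 ek; apply: inL_sum => j _.
have [t ->] := prim_rootP hz (e1 j); rewrite expr1; exact: inL_zX.
Qed.

Lemma lam_inL i (c : gT -> algC) : (forall x, inL z (c x)) -> inL z (lam i c).
Proof.
move=> Hc; rewrite /lam irr1_degree.
set m := irr_degree _.
have -> : forall a : algC, a / m%:R = a * ratr (m%:R^-1) by move=> a; rewrite fmorphV rmorph_nat.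
apply: inL_mul; last exact: inL_rat.
by apply: inL_sum => x _; apply: inL_mul => //; apply: chi_inL.
Qed.

Lemma core (c : gT -> algC) : classf c -> (forall x, F (c x)) ->
  (forall a, eigenvalue (Mc c) a -> F a) <->
  (forall k, ZF k -> forall x, c (x ^+ k)%g = c x).
Proof.
move=> cc Fc; split.
  move=> Hev k zk x; have [_ ck _] := zk; have [u au] := Qn_aut_exists ck.
  apply: (core_inv cc ck au) => [y | i]; first exact: (F_fix hz hFL au zk (Fc y)).
  by apply: (F_fix hz hFL au zk); apply: Hev; apply: lam_eig.
move=> Hinv a /(eig_lam cc)[i ->].
have [p Dp] := lam_inL i (fun x => hFL (Fc x)).
rewrite Dp; apply: (fixed_inF hz hF) => k zk.
have [_ ck _] := zk; have [u au] := Qn_aut_exists ck.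
rewrite -(au z (prim_expr_order hz)) -u_pQ -Dp.
apply: (core_fix cc ck au) => [y|]; first exact: (F_fix hz hFL au zk (Fc y)).
exact: Hinv.
Qed.

Lemma lam_mul (c1 c2 : gT -> algC) i : classf c1 -> classf c2 ->
  lam i (conv c1 c2) = lam i c1 * lam i c2.
Proof.
move=> cc1 cc2.
have cc3 : classf (conv c1 c2).
  move=> w y; rewrite /conv (reindex_inj (conjg_inj y)) /=.
  by apply: eq_bigr => x _; rewrite cc1 -conjVg -conjMg cc2.
have := ev_eigen i 1%g cc3; rewrite -Mc_mul mulmxA ev_eigen // -scalemxAl ev_eigen //.
rewrite scalerA => /eqP; rewrite -subr_eq0 -scalerBl scaler_eq0 (negbTE (ev_neq0 _)) orbF.
by rewrite subr_eq0 => /eqP.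
Qed.

Lemma classf_conv (c1 c2 : gT -> algC) : classf c1 -> classf c2 -> classf (conv c1 c2).
Proof.
move=> cc1 cc2 w y; rewrite /conv (reindex_inj (conjg_inj y)) /=.
by apply: eq_bigr => x _; rewrite cc1 -conjVg -conjMg cc2.
Qed.

End Core.
Section Assemble.
Variable gT : finGroupType.
Local Notation GT := [set: gT]%G.

Lemma Mc_ext (c d : gT -> algC) : (forall x, c x = d x) -> Mc c = Mc d.
Proof. by move=> H; apply/matrixP => i j; rewrite !mxE H. Qed.

Lemma Mc_sum (I : finType) (P : pred I) (a : I -> algC) (f : I -> gT -> algC) :
  \sum_(i | P i) a i *: Mc (f i) = Mc (fun h => \sum_(i | P i) a i * f i h).
Proof. by apply/matrixP => i j; rewrite summxE !mxE; apply: eq_bigr => k _; rewrite !mxE. Qed.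

Lemma Mc_sum1 (I : finType) (P : pred I) (f : I -> gT -> algC) :
  \sum_(i | P i) Mc (f i) = Mc (fun h => \sum_(i | P i) f i h).
Proof. by apply/matrixP => i j; rewrite summxE !mxE; apply: eq_bigr => k _; rewrite !mxE. Qed.

Lemma Mc_ind (P : pred gT) : \sum_(g | P g) Amat g = Mc (fun g => (P g)%:R).
Proof.
rewrite -Mc_Amat big_mkcond; apply: eq_bigr => g _.
by case: (P g); rewrite ?scale1r ?scale0r.
Qed.

Lemma AmatS_Mc (C : {set gT}) : AmatS C = Mc (fun g => (g \in C)%:R).
Proof. exact: Mc_ind. Qed.

Lemma Bmat_Mc z F (g : gT) : Bmat z F g = Mc (fun h => (h \in clF z F g)%:R).
Proof. by rewrite /Bmat Mc_ind; apply: Mc_ext => h; rewrite in_clF. Qed.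

Lemma LA_Mc (cK : {set gT} -> algC) :
  \sum_(K in classes GT) cK K *: AmatS K = Mc (fun g => cK (g ^: GT)%g).
Proof.
rewrite -Mc_Amat (partition_big (fun g => g ^: GT)%g (mem (classes GT))) /=; last first.
  by move=> g _; apply: mem_classes; rewrite in_setT.
apply: eq_bigr => K KC; rewrite /AmatS scaler_sumr.
case/imsetP: KC => x _ DK.
apply: eq_big => [g|g]; first by rewrite DK /=; apply/idP/eqP => [/class_eqP|<-] //; apply: class_refl.
by rewrite DK => /class_eqP ->.
Qed.

End Assemble.
Section Scheme.
Variables (gT : finGroupType) (z : algC) (hz : (expo gT).-primitive_root z)
  (F : algC -> Prop) (hF : is_subfield F) (hFL : forall x, F x -> inL z x).
Local Notation GT := [set: gT]%G.

Let ind (g : gT) := fun h : gT => (h \in clF z F g)%:R : algC.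

Let Bm g : Bmat z F g = Mc (ind g).
Proof. exact: Bmat_Mc. Qed.

Let ind1 (g h : gT) : ind g h = 1 -> simF z F h g.
Proof.
rewrite /ind in_clF; case: asboolP => // _ /eqP; rewrite eq_sym oner_eq0.
by [].
Qed.

Let refl_in (g : gT) : g \in clF z F g.
Proof. by rewrite in_clF; apply/asboolP; apply: (simF_refl hz). Qed.

Lemma sum_block (K0 : {set gT}) : K0 \in classes GT ->
  \sum_(K in [set K in classes GT | clF z F (repr K0) == clF z F (repr K)]) AmatS K
   = Bmat z F (repr K0).
Proof.
move=> K0C; set b := [set K in classes GT | _].
rewrite Bm (eq_bigr (fun K : {set gT} => Mc (fun g : gT => (g \in K)%:R))); last by move=> K _; rewrite AmatS_Mc.
rewrite Mc_sum1; apply: Mc_ext => g.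
have reprg : simF z F (repr (g ^: GT)%g) g.
  have : repr (g ^: GT)%g \in (g ^: GT)%g by apply: mem_repr (class_refl _ _).
  by case/imsetP => y _ ->; apply: (simF_conjl hz).
have claim : ((g ^: GT)%g \in b) = (g \in clF z F (repr K0)).
  rewrite inE mem_classes ?in_setT //= (clF_eq hz reprg) (clF_eqE hz) in_clF.
  by apply/asboolP/asboolP; apply: (simF_sym hz).
have clK K : K \in classes GT -> (g \in K) = (K == (g ^: GT)%g).
  case/imsetP => x _ ->; apply/idP/eqP => [/class_eqP -> // | ->]; exact: class_refl.
rewrite /ind -claim.
have [gb|ngb] := boolP ((g ^: GT)%g \in b).
  rewrite (bigD1 (g ^: GT)%g) //= class_refl big1 ?addr0 // => K /andP[Kb nK].
  by rewrite clK ?(negbTE nK) //; move: Kb; rewrite inE => /andP[].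
rewrite big1 // => K Kb; rewrite clK; last by move: Kb; rewrite inE => /andP[].
by case: eqP Kb => // -> /(negP ngb).
Qed.

Lemma scheme_part : is_subscheme (fun M => exists g : gT, M = Bmat z F g).
Proof.
have cind g : classf (ind g) by move=> x y; rewrite /ind (clF_conj hz).
have iind g k : inZF (expo gT) z F k -> forall x, ind g (x ^+ k)%g = ind g x.
  by move=> zk x; rewrite /ind (clF_pow hz).
have Find g x : F (ind g x) by apply: (Fb hF).
split; first split.
- move=> M [g ->]; rewrite Bm; split.
    apply/eqP => /matrixP /(_ (enum_rank 1%g) (enum_rank g)).
    by rewrite !mxE !enum_rankK invg1 mulg1 /ind refl_in => /eqP; rewrite oner_eq0.
  by move=> i j; rewrite mxE /ind; case: (_ \in _); [right|left].
- exists 1%g; rewrite Bm; apply/matrixP => i j; rewrite !mxE /ind.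
  have E (w : gT) : (w \in clF z F 1%g) = (w == 1%g).
    apply/idP/eqP => [|->]; last exact: refl_in.
    rewrite in_clF => /asboolP[k [_ hk]].
    by move: hk; rewrite expg1n class1G inE => /eqP.
  by rewrite E -eq_mulgV1 (inj_eq enum_val_inj) eq_sym.
- move=> i j; exists (Bmat z F (enum_val j * (enum_val i)^-1)%g); split.
    by split; [eexists | rewrite Bm mxE /ind refl_in].
  move=> M' [[g' ->] e1]; move: e1; rewrite Bm mxE => /ind1 s.
  by rewrite !Bm /ind (clF_eq hz s).
- move=> M [g ->]; exists (g^-1)%g; rewrite !Bm; apply/matrixP => i j; rewrite !mxE /ind.
  by rewrite -clF_inv invMg invgK.
- move=> M N P [g1 ->] [g2 ->] [g3 ->] i j i' j'.
  rewrite !Bm !Mc_mul !mxE => /ind1 s1 /ind1 s2.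
  set w := (enum_val j * _)%g; set w' := (enum_val j' * _)%g.
  have s : simF z F w' w := simF_trans hz s2 (simF_sym hz s1).
  set c3 := conv (ind g1) (ind g2).
  have cc3 : classf c3 by apply: classf_conv.
  have Hinv : forall k, inZF (expo gT) z F k -> forall x, c3 (x ^+ k)%g = c3 x.
    move=> k zk; have [_ ck _] := zk; have [u au] := Qn_aut_exists ck.
    apply: (core_inv cc3 ck au) => [y | l].
      apply: (F_fix hz hFL au zk); apply: (Fsum hF) => x _; apply: (FM hF); exact: Find.
    rewrite /c3 lam_mul // rmorphM.
    have fx g : u (lam l (ind g)) = lam l (ind g).
      apply: (core_fix (cind g) ck au) => [y|]; last exact: iind.
      by apply: (F_fix hz hFL au zk); exact: Find.
    by rewrite !fx.
  case: s => k [zk hk]; case/imsetP: hk => y _ ->.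
  by rewrite cc3 Hinv.
exists (preim_partition (fun K : {set gT} => clF z F (repr K)) (classes GT)).
split; first exact: preim_partitionP.
move=> M; split.
- move=> [g ->]; exists [set K in classes GT | clF z F (repr (g ^: GT)%g) == clF z F (repr K)].
    by apply/imsetP; exists (g ^: GT)%g => //; apply: mem_classes; rewrite in_setT.
  rewrite sum_block ?mem_classes ?in_setT //.
  have : repr (g ^: GT)%g \in (g ^: GT)%g by apply: mem_repr (class_refl _ _).
  case/imsetP => y _ ->; rewrite !Bm /ind (clF_eq hz (simF_conjl hz F g y)) //.
- by move=> [b /imsetP[K0 K0C ->] ->]; exists (repr K0); rewrite sum_block.
Qed.

End Scheme.
Theorem theorem9p1 (gT : finGroupType) (z : algC)
  (hz : (expo gT).-primitive_root z)
  (F : algC -> Prop) (hF : is_subfield F) (hFL : forall x, F x -> inL z x) :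
  [/\ (forall M : 'M[algC]_#|gT|,
         (in_LA z M /\ (forall i j, F (M i j)) /\ (forall a, eigenvalue M a -> F a))
         <-> in_FspanB z F M),
      is_subscheme (fun M => exists g : gT, M = Bmat z F g) &
      (forall C : {set gT}, (forall g x, g \in C -> (g ^ x)%g \in C) ->
         ((forall a, eigenvalue (AmatS C) a -> F a) <->
          (forall g h, g \in C -> simF z F h g -> h \in C)))].
Proof.
pose GT := [set: gT]%G.
split.
- move=> M; split.
  + move=> [[cK [LcK DM]] [FMe Hev]].
    pose c := fun g => cK (g ^: GT)%g.
    have DMc : M = Mc c by rewrite DM LA_Mc.
    have cc : classf c by move=> x y; rewrite /c classGidl ?in_setT.
    have Fc x : F (c x).
      have := FMe (enum_rank 1%g) (enum_rank x).
      by rewrite DMc !mxE !enum_rankK invg1 mulg1.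
    have Hinv := (core hz hF hFL cc Fc).1 (ltac:(by rewrite -DMc)).
    have cF h g : simF z F h g -> c h = c g.
      by move=> [k [zk hk]]; case/imsetP: hk => y _ ->; rewrite cc Hinv.
    pose N (g : gT) := #|clF z F g|.
    have Nh (h : gT) : (N h)%:R != 0 :> algC.
      rewrite pnatr_eq0 -lt0n; apply/card_gt0P; exists h.
      by rewrite in_clF; apply/asboolP; apply: (simF_refl hz).
    exists (fun g => c g / (N g)%:R); split.
      by move=> g; apply: (FM hF (Fc g)); apply: (FV hF); apply: (Fnat hF).
    rewrite DMc (eq_bigr (fun g => (c g / (N g)%:R) *: Mc (fun h => (h \in clF z F g)%:R)));
      last by move=> g _; rewrite Bmat_Mc.
    rewrite Mc_sum; apply: Mc_ext => h.
    rewrite (bigID (fun g => h \in clF z F g)) /= [X in _ + X]big1 ?addr0; last first.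
      by move=> g /negbTE ->; rewrite mulr0.
    rewrite (eq_bigr (fun _ => c h / (N h)%:R)) => [|g hg]; last first.
      have s : simF z F h g by move: hg; rewrite in_clF => /asboolP.
      by rewrite hg mulr1 (cF _ _ s) /N (clF_eq hz s).
    rewrite sumr_const.
    have -> : #|[pred g | h \in clF z F g]| = N h.
      apply: eq_card => g; rewrite /= !in_clF.
      rewrite inE in_clF.
      by apply/asboolP/asboolP; apply: (simF_sym hz).
    by rewrite -[c h / _ *+ _]mulr_natr divfK ?Nh.
  + move=> [d [Fd DM]].
    pose c := fun h => \sum_g d g * (h \in clF z F g)%:R.
    have DMc : M = Mc c.
      rewrite DM (eq_bigr (fun g => d g *: Mc (fun h => (h \in clF z F g)%:R)));
        last by move=> g _; rewrite Bmat_Mc.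
      by rewrite Mc_sum.
    have Fc x : F (c x).
      by apply: (Fsum hF) => g _; apply: (FM hF (Fd g)); apply: (Fb hF).
    have cc : classf c by move=> x y; rewrite /c; apply: eq_bigr => g _; rewrite (clF_conj hz).
    have Hinv : forall k, inZF (expo gT) z F k -> forall x, c (x ^+ k)%g = c x.
      by move=> k zk x; apply: eq_bigr => g _; rewrite (clF_pow hz).
    split; [|split].
    * exists (fun K => c (repr K)); split; first by move=> K; apply: hFL.
      rewrite DMc LA_Mc; apply: Mc_ext => g.
      have : repr (g ^: GT)%g \in (g ^: GT)%g by apply: mem_repr (class_refl _ _).
      by case/imsetP => y _ ->; rewrite cc.
    * by move=> i j; rewrite DMc mxE; apply: Fc.
    * rewrite DMc; move=> a; have K := (core hz hF hFL cc Fc).2 Hinv a. exact: K.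
- exact: (scheme_part hz hF hFL).
- move=> C CC.
  pose c := fun g => (g \in C)%:R : algC.
  have cc : classf c.
    move=> x y; rewrite /c.
    suff -> : ((x ^ y)%g \in C) = (x \in C) by [].
    apply/idP/idP => H; last exact: CC.
    by rewrite -(conjgK y x); apply: CC.
  have Fc x : F (c x) by apply: (Fb hF).
  rewrite AmatS_Mc; split.
  + move=> Hev g h gC [k [zk hk]].
    have Hinv := (core hz hF hFL cc Fc).1 Hev.
    case/imsetP: hk => y _ Eh.
    have : c h = c g by rewrite Eh cc Hinv.
    by rewrite /c gC; case: (h \in C) => //= /esym/eqP; rewrite oner_eq0.
  + move=> Hcl; have K := (core hz hF hFL cc Fc).2; apply: K => k zk x; rewrite /c.
    suff -> : ((x ^+ k)%g \in C) = (x \in C) by [].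
    apply/idP/idP => H.
      by apply: (Hcl _ _ H); apply: (simF_sym hz); apply: (simF_pow _ zk).
    by apply: (Hcl _ _ H); apply: (simF_pow _ zk).
Qed.
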